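(* Let $N$ be a finitary plain structural conflict net, and let $\approx$ be any equivalence relation on Petri nets such that $N_1 \approx^\Delta_{bSTb} N_2$ implies $N_1\approx N_2$, and $N_1\approx N_2$ implies $N_1\approx_{\mathscr F} N_2$. Then $N$ is distributable up to $\approx$ (i.e. there exists a distributed Petri net $D$ with $D\approx N$) if and only if $N$ has no fully reachable pure $\mathsf{M}$.
   Context: Fix a set $\mathrm{Act}$ of visible actions and an invisible action $\tau\notin\mathrm{Act}$. A (labelled) Petri net is a tuple $N=(S,T,F,M_0,\ell)$ with $S$ (places) and $T$ (transitions) disjoint sets, $F:(S\times T)\cup(T\times S)\to\mathbb N$ (flow relation with arc weights), $M_0\in\mathbb N^S$ (initial marking) and $\ell:T\to\mathrm{Act}\cup\{\tau\}$. A marking is a multiset $M\in\mathbb N^S$. For $x\in S\cup T$ the multisets ${}^\bullet x$, $x^\bullet$ are given by ${}^\bullet x(y)=F(y,x)$, $x^\bullet(y)=F(x,y)$, extended additively to finite multisets of transitions. For multisets, $A\le B$ is pointwise, $A\cap B$ is pointwise minimum and $A\cup B$ pointwise maximum. For a finite nonempty multiset $G$ of transitions, $M[G\rangle M'$ iff ${}^\bullet G\le M$ and $M'=M-{}^\bullet G+G^\bullet$; $M[t\rangle M'$ abbreviates $M[\{t\}\rangle M'$. The set $[M_0\rangle$ of reachable markings is the smallest set containing $M_0$ and closed under such steps. Transitions $t,u$ are concurrent, $t\smile u$, iff $M[\{t\}+\{u\}\rangle$ for some reachable $M$. $N$ is a structural conflict net iff $t\smile u$ implies ${}^\bullet t\cap{}^\bullet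 u=\emptyset$. $N$ is plain iff $\ell$ is injective and $\ell(t)\neq\tau$ for all $t$. $N$ is finitary iff ${}^\bullet t\neq\emptyset$ for all $t\in T$ and every reachable marking is finite and enables only finitely many transitions. $N$ has a fully reachable pure $\mathsf M$ iff there are $t,u,v\in T$ with ${}^\bullet t\cap{}^\bullet u\neq\emptyset$, ${}^\bullet u\cap{}^\bullet v\neq\emptyset$, ${}^\bullet t\cap{}^\bullet v=\emptyset$ and a reachable marking $M$ with ${}^\bullet t\cup{}^\bullet u\cup{}^\bullet v\le M$. $N$ is distributed iff there is a function $D$ from $S\cup T$ to some set of locations such that (1) for all $s\in S,t\in T$, if $s\in{}^\bullet t$ then $D(t)=D(s)$; and (2) for all $t,u\in T$, $t\smile u$ implies $D(t)\neq D(u)$. Step failures equivalence: write $M\xrightarrow{\alpha}M'$ ($\alpha\in\mathrm{Act}\cup\{\tau\}$) iff $M[t\rangle M'$ for some $t$ with $\ell(t)=\alpha$; $\Rightarrow$ is the reflexive transitive closure of $\xrightarrow{\tau}$; $M\overset{a_1\cdots a_n}{\Longrightarrow}M'$ iff $M\Rightarrow\xrightarrow{a_1}\Rightarrow\cdots\xrightarrow{a_n}\Rightarrow M'$. For a step $A$ (a finite nonempty multiset over $\mathrm{Act}$), $M\xrightarrow{A}$ iff $M[G\rangle$ for some finite multiset $G$ of transitions with no $\tau$-labelled element whose multiset of labels is $A$. A pair $(\sigma,X)$ with $\sigma\in\mathrm{Act}^*$ and $X$ a finite set of steps is a step failure pair of $N$ iff there is $M$ with $M_0\overset{\sigma}{\Longrightarrow}M$,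 $M\not\xrightarrow{\tau}$ and $M\not\xrightarrow{A}$ for all $A\in X$. $N_1\approx_{\mathscr F}N_2$ iff they have the same step failure pairs. Branching ST-bisimilarity with explicit divergence: An LTS is $(\mathfrak S,\mathfrak T,\mathfrak M_0)$ with $\mathfrak T\subseteq\mathfrak S\times(\mathfrak A\cup\{\tau\})\times\mathfrak S$; $\Rightarrow$ is the reflexive transitive closure of $\xrightarrow{\tau}$, and $\mathfrak M\xrightarrow{(\alpha)}\mathfrak M'$ means $\mathfrak M\xrightarrow{\alpha}\mathfrak M'$ or ($\alpha=\tau$ and $\mathfrak M=\mathfrak M'$). A branching bisimulation with explicit divergence between LTSs is a relation $\mathcal B\subseteq\mathfrak S_1\times\mathfrak S_2$ with: (1) $\mathfrak M_{0,1}\mathcal B\mathfrak M_{0,2}$; (2) if $\mathfrak M_1\mathcal B\mathfrak M_2$ and $\mathfrak M_1\xrightarrow{\alpha}\mathfrak M_1'$ then there are $\mathfrak M_2^\dagger,\mathfrak M_2'$ with $\mathfrak M_2\Rightarrow\mathfrak M_2^\dagger\xrightarrow{(\alpha)}\mathfrak M_2'$, $\mathfrak M_1\mathcal B\mathfrak M_2^\dagger$, $\mathfrak M_1'\mathcal B\mathfrak M_2'$; (3) symmetrically; (4) if $\mathfrak M_1\mathcal B\mathfrak M_2$ and there is an infinite sequence $\mathfrak M_1=\mathfrak M_1^0\xrightarrow{\tau}\mathfrak M_1^1\xrightarrow{\tau}\cdots$ with $\mathfrak M_1^k\mathcal B\mathfrak M_2$ for all $k$, then there is an infinite sequence $\mathfrak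 M_2=\mathfrak M_2^0\xrightarrow{\tau}\mathfrak M_2^1\xrightarrow{\tau}\cdots$ with $\mathfrak M_1^k\mathcal B\mathfrak M_2^l$ for all $k,l$; (5) symmetrically. The ST-LTS of a net has as states ST-markings $(M,U)\in\mathbb N^S\times T^*$, initial state $(M_0,\varepsilon)$, labels $a^+$ and $a^{-n}$ ($a\in\mathrm{Act}$, $n>0$) and $\tau$, with $(M,U)\xrightarrow{a^+}(M-{}^\bullet t,Ut)$ iff $\ell(t)=a$ and $M[t\rangle$; $(M,U)\xrightarrow{a^{-n}}(M+t^\bullet,U^{-n})$ iff the $n$-th element $t$ of $U$ has $\ell(t)=a$, where $U^{-n}$ is $U$ with its $n$-th element removed; $(M,U)\xrightarrow{\tau}(M',U)$ iff $M[t\rangle M'$ for some $t$ with $\ell(t)=\tau$. $N_1\approx^\Delta_{bSTb}N_2$ iff there is a branching bisimulation with explicit divergence between their ST-LTSs. *)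

(* Defs.v *)
From Stdlib Require Import List Permutation Relations RelationClasses Arith.
Import ListNotations.

Unset Implicit Arguments.

Section Nets.
Variable Act : Type.

(* A labelled Petri net; None as a label stands for the invisible action tau.
   pre s t = F(s,t), post t s = F(t,s). *)
Record net : Type := Net {
  place : Type;
  trans : Type;
  pre : place -> trans -> nat;
  post : trans -> place -> nat;
  M0 : place -> nat;
  lab : trans -> option Act
}.

Definition marking (N : net) := place N -> nat.

(* preset / postset of a finite multiset of transitions (given as a list) *)
Definition preG (N : net) (G : list (trans N)) (s : place N) : nat :=
  fold_right (fun t acc => pre N s t + acc) 0 G.
Definition postG (N : net) (G : list (trans N)) (s : place N) : nat :=
  fold_right (fun t acc => post N t s + acc) 0 G.

Definition fires (N : net) (M : marking N) (G : list (trans N)) (M' : marking N) : Prop :=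
  G <> [] /\ (forall s, preG N G s <= M s) /\
  (forall s, M' s = M s - preG N G s + postG N G s).

Definition enabled (N : net) (M : marking N) (G : list (trans N)) : Prop :=
  G <> [] /\ (forall s, preG N G s <= M s).

Inductive reachable (N : net) : marking N -> Prop :=
| reach_init : reachable N (M0 N)
| reach_step : forall M G M', reachable N M -> fires N M G M' -> reachable N M'.

Definition concurrent (N : net) (t u : trans N) : Prop :=
  exists M, reachable N M /\ enabled N M [t; u].

Definition pre_disjoint (N : net) (t u : trans N) : Prop :=
  forall s, Nat.min (pre N s t) (pre N s u) = 0.

Definition structural_conflict (N : net) : Prop :=
  forall t u, concurrent N t u -> pre_disjoint N t u.

Definition plain (N : net) : Prop :=
  (forall t u, lab N t = lab N u -> t = u) /\ (forall t, lab N t <> None).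

Definition finite_marking (N : net) (M : marking N) : Prop :=
  exists l : list (place N), forall s, M s <> 0 -> In s l.

Definition finitary (N : net) : Prop :=
  (forall t, exists s, pre N s t <> 0) /\
  (forall M, reachable N M ->
     finite_marking N M /\
     exists l : list (trans N), forall t, enabled N M [t] -> In t l).

Definition has_pure_M (N : net) : Prop :=
  exists t u v,
    ~ pre_disjoint N t u /\ ~ pre_disjoint N u v /\ pre_disjoint N t v /\
    exists M, reachable N M /\
      forall s, Nat.max (Nat.max (pre N s t) (pre N s u)) (pre N s v) <= M s.

Definition distributed (N : net) : Prop :=
  exists (Loc : Type) (DS : place N -> Loc) (DT : trans N -> Loc),
    (forall s t, pre N s t <> 0 -> DT t = DS s) /\
    (forall t u, concurrent N t u -> DT t <> DT u).

Definition lstep (N : net) (M : marking N) (a : option Act) (M' : marking N) : Prop :=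
  exists t, lab N t = a /\ fires N M [t] M'.

Definition tau_star (N : net) : relation (marking N) :=
  clos_refl_trans _ (fun M M' => lstep N M None M').

Inductive weak_seq (N : net) : marking N -> list Act -> marking N -> Prop :=
| ws_nil : forall M M', tau_star N M M' -> weak_seq N M [] M'
| ws_cons : forall M M1 M2 M' a sigma,
    tau_star N M M1 -> lstep N M1 (Some a) M2 -> weak_seq N M2 sigma M' ->
    weak_seq N M (a :: sigma) M'.

(* M --A--> for a step A (finite nonempty multiset over Act, given as a list) *)
Definition can_step (N : net) (M : marking N) (A : list Act) : Prop :=
  exists G : list (trans N), enabled N M G /\
    exists la : list Act, map (lab N) G = map (@Some Act) la /\ Permutation la A.

Definition step_failure_pair (N : net) (sigma : list Act) (X : list (list Act)) : Prop :=
  (forall A, In A X -> A <> []) /\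
  exists M, weak_seq N (M0 N) sigma M /\
    (~ exists M', lstep N M None M') /\
    (forall A, In A X -> ~ can_step N M A).

Definition step_failures_eq (N1 N2 : net) : Prop :=
  forall sigma X, step_failure_pair N1 sigma X <-> step_failure_pair N2 sigma X.

End Nets.
Arguments place {Act}.
Arguments trans {Act}.
Arguments pre {Act}.
Arguments post {Act}.
Arguments M0 {Act}.
Arguments lab {Act}.
Arguments marking {Act}.
Arguments preG {Act}.
Arguments postG {Act}.
Arguments fires {Act}.
Arguments enabled {Act}.
Arguments reachable {Act}.
Arguments concurrent {Act}.
Arguments pre_disjoint {Act}.
Arguments structural_conflict {Act}.
Arguments plain {Act}.
Arguments finite_marking {Act}.
Arguments finitary {Act}.
Arguments has_pure_M {Act}.
Arguments distributed {Act}.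
Arguments lstep {Act}.
Arguments tau_star {Act}.
Arguments weak_seq {Act}.
Arguments can_step {Act}.
Arguments step_failure_pair {Act}.
Arguments step_failures_eq {Act}.

Record lts (L : Type) : Type := LTS {
  lstate : Type;
  ltr : lstate -> L -> lstate -> Prop;
  linit : lstate
}.
Arguments lstate {L} _.
Arguments ltr {L} _ _ _ _.
Arguments linit {L} _.

Section Branching.
Variables (L : Type) (tau : L).

Definition ltau_star (A : lts L) : relation (lstate A) :=
  clos_refl_trans _ (fun x y => ltr A x tau y).

Definition half_bbisim_div (A B : lts L) (R : lstate A -> lstate B -> Prop) : Prop :=
  (forall x y a x', R x y -> ltr A x a x' ->
     exists yd y', ltau_star B y yd /\
       (ltr B yd a y' \/ (a = tau /\ yd = y')) /\ R x yd /\ R x' y') /\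
  (forall (x : lstate A) (y : lstate B) (f : nat -> lstate A),
     f 0 = x -> (forall k, ltr A (f k) tau (f (S k))) -> (forall k, R (f k) y) ->
     exists g : nat -> lstate B, g 0 = y /\ (forall l, ltr B (g l) tau (g (S l))) /\
       forall k l, R (f k) (g l)).

Definition bbisim_div (A B : lts L) (R : lstate A -> lstate B -> Prop) : Prop :=
  R (linit A) (linit B) /\ half_bbisim_div A B R /\
  half_bbisim_div B A (fun y x => R x y).

End Branching.

Inductive stlab (Act : Type) : Type :=
| STplus : Act -> stlab Act
| STminus : Act -> nat -> stlab Act (* a^{-n}, n > 0 *)
| STtau : stlab Act.
Arguments STtau {Act}.
Arguments STplus {Act} _.
Arguments STminus {Act} _ _.

Section ST.
Variable Act : Type.

Definition st_marking (N : net Act) : Type := (marking N * list (trans N))%type.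

Inductive st_step (N : net Act) : st_marking N -> stlab Act -> st_marking N -> Prop :=
| st_plus : forall M U t a,
    lab N t = Some a -> enabled N M [t] ->
    st_step N (M, U) (STplus a) (fun s => M s - pre N s t, U ++ [t])
| st_minus : forall M U t a n,
    0 < n -> nth_error U (n - 1) = Some t -> lab N t = Some a ->
    st_step N (M, U) (STminus a n)
      (fun s => M s + post N t s, firstn (n - 1) U ++ skipn n U)
| st_tau : forall M M' U t,
    lab N t = None -> fires N M [t] M' -> st_step N (M, U) STtau (M', U).

Definition st_lts (N : net Act) : lts (stlab Act) :=
  @LTS _ (st_marking N) (st_step N) (M0 N, []).

Definition bSTb_div (N1 N2 : net Act) : Prop :=
  exists R, bbisim_div (stlab Act) STtau (st_lts N1) (st_lts N2) R.

End ST.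
Arguments st_marking {Act} _.
Arguments st_step {Act} _ _ _ _.
Arguments st_lts {Act} _.
Arguments bSTb_div {Act} _ _.

(* Main.v *)
Require Import Defs.
From Stdlib Require Import List Permutation Relations RelationClasses Arith Lia.
From Stdlib Require Import Classical ClassicalEpsilon FunctionalExtensionality PropExtensionality.
Import ListNotations.

Section Generic.
Variable Act : Type.
Variable N : net Act.

Lemma preG_one (t : trans N) s : preG N [t] s = pre N s t.
Proof. simpl; lia. Qed.
Lemma postG_one (t : trans N) s : postG N [t] s = post N t s.
Proof. simpl; lia. Qed.

Lemma fires_one M t M' :
  fires N M [t] M' <-> (forall s, pre N s t <= M s) /\
                        (forall s, M' s = M s - pre N s t + post N t s).
Proof.
  unfold fires; split.
  - intros [_ [H1 H2]]; split; intro s; [specialize (H1 s)|specialize (H2 s)];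
      rewrite ?preG_one, ?postG_one in *; auto.
  - intros [H1 H2]; split; [discriminate|split]; intro s;
      rewrite ?preG_one, ?postG_one; auto.
Qed.

Inductive reach1 : marking N -> Prop :=
| r1_init : reach1 (M0 N)
| r1_step : forall M t M', reach1 M -> fires N M [t] M' -> reach1 M'.

Lemma reach1_fires : forall G M M', reach1 M -> fires N M G M' -> reach1 M'.
Proof.
  induction G as [|g G IH]; intros M M' HR [HG [H1 H2]]; [congruence|].
  destruct G as [|g' G'].
  - apply r1_step with M g; auto. split; [discriminate|split]; auto.
  - set (M1 := fun s => M s - pre N s g + post N g s).
    apply IH with M1.
    + apply r1_step with M g; auto. apply fires_one. split.
      * intro s; specialize (H1 s); simpl in H1; lia.
      * intro s; reflexivity.
    + split; [discriminate|split].
      * intro s; specialize (H1 s); simpl in H1 |- *; unfold M1; lia.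
      * intro s; specialize (H1 s); specialize (H2 s); simpl in H1, H2 |- *; unfold M1; lia.
Qed.

Lemma reachable_reach1 M : reachable N M -> reach1 M.
Proof.
  induction 1. constructor. eapply reach1_fires; eauto.
Qed.

Lemma reach1_reachable M : reach1 M -> reachable N M.
Proof.
  induction 1. constructor. eapply reach_step; eauto.
Qed.

Lemma tau_star_reach M M' : tau_star N M M' -> reachable N M -> reachable N M'.
Proof.
  induction 1; auto. destruct H as [t [_ Ht]]. intro; eapply reach_step; eauto.
Qed.

Lemma weak_seq_reach M s M' : weak_seq N M s M' -> reachable N M -> reachable N M'.
Proof.
  induction 1; intro HR.
  - eapply tau_star_reach; eauto.
  - apply IHweak_seq. destruct H0 as [t [_ Ht]]. eapply reach_step; [|exact Ht].
    eapply tau_star_reach; eauto.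
Qed.

Lemma weak_seq_snoc M s M1 a M2 :
  weak_seq N M s M1 -> lstep N M1 (Some a) M2 -> weak_seq N M (s ++ [a]) M2.
Proof.
  induction 1; intro Hl; simpl.
  - econstructor; eauto. constructor. apply rt_refl.
  - econstructor; eauto.
Qed.

Lemma enabled_one M t : enabled N M [t] <-> forall s, pre N s t <= M s.
Proof.
  unfold enabled; split.
  - intros [_ H] s; specialize (H s); rewrite preG_one in H; auto.
  - intro H; split; [discriminate|]; intro s; rewrite preG_one; auto.
Qed.

Lemma enabled_two M t u : enabled N M [t; u] <-> forall s, pre N s t + pre N s u <= M s.
Proof.
  unfold enabled; split.
  - intros [_ H] s; specialize (H s); simpl in H; lia.
  - intro H; split; [discriminate|]; intro s; specialize (H s); simpl; lia.
Qed.

End Generic.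


Section CanStep.
Variable Act : Type.
Variable N : net Act.

Lemma can_step2 M a b : can_step N M [a; b] ->
  exists g1 g2 l1 l2, enabled N M [g1; g2] /\ lab N g1 = Some l1 /\ lab N g2 = Some l2 /\
    ((l1 = a /\ l2 = b) \/ (l1 = b /\ l2 = a)).
Proof.
  intros [G [HG [la [Hm Hp]]]].
  pose proof (Permutation_length Hp) as Hl. simpl in Hl.
  destruct la as [|l1 [|l2 [|]]]; simpl in Hl; try lia.
  destruct G as [|g1 [|g2 [|]]]; simpl in Hm; try discriminate.
  injection Hm; intros H2 H1.
  exists g1, g2, l1, l2; split; [auto|split; [auto|split; [auto|]]].
  apply Permutation_length_2 in Hp; destruct Hp as [[-> ->]|[-> ->]]; auto.
Qed.

Lemma can_step1 M b : can_step N M [b] -> exists g, enabled N M [g] /\ lab N g = Some b.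
Proof.
  intros [G [HG [la [Hm Hp]]]].
  apply Permutation_sym, Permutation_length_1_inv in Hp. subst.
  destruct G as [|g [|]]; simpl in Hm; try discriminate.
  injection Hm; intros. exists g; auto.
Qed.

Lemma can_step2_intro M g1 g2 l1 l2 A : enabled N M [g1; g2] -> lab N g1 = Some l1 -> lab N g2 = Some l2 ->
  Permutation [l1; l2] A -> can_step N M A.
Proof.
  intros. exists [g1; g2]; split; auto. exists [l1; l2]; split; auto. simpl; congruence.
Qed.

Lemma can_step1_intro M g b : enabled N M [g] -> lab N g = Some b -> can_step N M [b].
Proof.
  intros. exists [g]; split; auto. exists [b]; split; auto. simpl; congruence.
Qed.

End CanStep.

Section Plain.
Variable Act : Type.
Variable N : net Act.
Hypothesis Hplain : plain N.

Lemma plain_no_tau M M' : ~ lstep N M None M'.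
Proof. intros [t [Hl _]]. destruct Hplain as [_ H]. exact (H t Hl). Qed.

Lemma plain_tau_star M M' : tau_star N M M' -> M' = M.
Proof.
  induction 1; auto. exfalso; eapply plain_no_tau; eauto. congruence.
Qed.

Lemma plain_det M s M1 : weak_seq N M s M1 -> forall M2, weak_seq N M s M2 -> M1 = M2.
Proof.
  induction 1; intros M2' H2; inversion H2; subst.
  - apply plain_tau_star in H; apply plain_tau_star in H0; congruence.
  - apply plain_tau_star in H; apply plain_tau_star in H5. subst.
    apply IHweak_seq. replace M2 with M4; auto.
    destruct H0 as [t [Ht Hf]]; destruct H7 as [u [Hu Hf']].
    destruct Hplain as [Hinj _]. assert (t = u) by (apply Hinj; congruence). subst.
    apply fires_one in Hf; apply fires_one in Hf'.
    apply functional_extensionality; intro x. destruct Hf as [_ A]; destruct Hf' as [_ B].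
    rewrite A, B; auto.
Qed.

Lemma plain_trace M : reachable N M -> exists s, weak_seq N (M0 N) s M.
Proof.
  intro H. apply reachable_reach1 in H. induction H.
  - exists []. constructor. apply rt_refl.
  - destruct IHreach1 as [s Hs].
    destruct Hplain as [_ Hnt]. destruct (lab N t) as [a|] eqn:E; [|exfalso; exact (Hnt t E)].
    exists (s ++ [a]). eapply weak_seq_snoc; eauto. exists t; auto.
Qed.

End Plain.


Lemma pd_sym {Act} (N : net Act) t u : pre_disjoint N t u -> pre_disjoint N u t.
Proof. unfold pre_disjoint; intros H s; rewrite Nat.min_comm; auto. Qed.

Lemma only_if_dir {Act} (N D : net Act) :
  plain N -> structural_conflict N -> distributed D -> step_failures_eq D N -> ~ has_pure_M N.
Proof.
  intros Hpl Hsc [Loc [DS [DT [Hd1 Hd2]]]] Heq [t [u [v [Htu [Huv [Htv [M [HM Hmax]]]]]]]].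
  destruct Hpl as [Hinj Hnt] eqn:Hpl'.
  destruct (lab N t) as [a|] eqn:Ea; [|exact (Hnt t Ea)].
  destruct (lab N u) as [b|] eqn:Eb; [|exact (Hnt u Eb)].
  destruct (lab N v) as [c|] eqn:Ec; [|exact (Hnt v Ec)].
  assert (Ht : forall s, pre N s t <= M s) by (intro s; specialize (Hmax s); lia).
  assert (Hu : forall s, pre N s u <= M s) by (intro s; specialize (Hmax s); lia).
  assert (Hv : forall s, pre N s v <= M s) by (intro s; specialize (Hmax s); lia).
  destruct (plain_trace _ _ Hpl M HM) as [sg Hsg].
  assert (Nab : forall a b x y, lab N x = Some a -> lab N y = Some b -> ~ pre_disjoint N x y -> ~ can_step N M [a; b]).
  { clear a b Ea Eb Ec. intros a b x y Hx Hy Hxy Hc. apply can_step2 in Hc.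
    destruct Hc as [g1 [g2 [l1 [l2 [He [G1 [G2 Hl]]]]]]].
    destruct Hl as [[-> ->]|[-> ->]].
    - assert (g1 = x) by (apply Hinj; congruence). assert (g2 = y) by (apply Hinj; congruence). subst.
      apply Hxy. apply Hsc. exists M; auto.
    - assert (g1 = y) by (apply Hinj; congruence). assert (g2 = x) by (apply Hinj; congruence). subst.
      apply Hxy. apply pd_sym. apply Hsc. exists M; auto. }
  assert (NotA : ~ can_step N M [a; b]) by (apply (Nab a b t u); auto).
  assert (NotB : ~ can_step N M [b; c]) by (apply (Nab b c u v); auto).
  assert (CanAC : can_step N M [a; c]).
  { apply (can_step2_intro _ _ M t v a c); auto. apply enabled_two. intro s.
    specialize (Htv s); specialize (Ht s); specialize (Hv s); lia. }
  assert (CanB : can_step N M [b]) by (apply (can_step1_intro _ _ M u b); auto; apply enabled_one; auto).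
  assert (NoTauN : ~ exists M', lstep N M None M') by (intros [M' H]; eapply plain_no_tau; eauto).
  assert (HN1 : step_failure_pair N sg [[a; b]; [b; c]]).
  { split. intros A HA; simpl in HA; destruct HA as [<-|[<-|[]]]; discriminate.
    exists M; split; auto; split; auto. intros A HA; simpl in HA; destruct HA as [<-|[<-|[]]]; auto. }
  apply Heq in HN1. destruct HN1 as [_ [MD [HMD [HstD HrefD]]]].
  assert (back : forall X, (forall A, In A X -> A <> []) -> (forall A, In A X -> ~ can_step D MD A) ->
     forall A, In A X -> can_step N M A -> False).
  { intros X HX HR A HA HC. assert (HP : step_failure_pair D sg X).
    { split; auto. exists MD; auto. }
    apply Heq in HP. destruct HP as [_ [M' [HM' [_ HR']]]].
    pose proof (plain_det _ _ Hpl _ _ _ Hsg _ HM'); subst. exact (HR' A HA HC). }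
  assert (DAC : can_step D MD [a; c]).
  { apply NNPP; intro Hn.
    apply (back [[a; b]; [b; c]; [a; c]]) with [a; c].
    - intros A HA; simpl in HA; destruct HA as [<-|[<-|[<-|[]]]]; discriminate.
    - intros A HA; simpl in HA; destruct HA as [<-|[<-|[<-|[]]]]; [apply HrefD; simpl; auto | apply HrefD; simpl; auto | exact Hn].
    - simpl; auto.
    - exact CanAC. }
  assert (DB : can_step D MD [b]).
  { apply NNPP; intro Hn.
    apply (back [[a; b]; [b; c]; [b]]) with [b].
    - intros A HA; simpl in HA; destruct HA as [<-|[<-|[<-|[]]]]; discriminate.
    - intros A HA; simpl in HA; destruct HA as [<-|[<-|[<-|[]]]]; [apply HrefD; simpl; auto | apply HrefD; simpl; auto | exact Hn].
    - simpl; auto.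
    - exact CanB. }
  assert (RD : reachable D MD) by (eapply weak_seq_reach; eauto; constructor).
  apply can_step2 in DAC. destruct DAC as [x [y [l1 [l2 [Hxy [Hx [Hy Hl]]]]]]].
  apply can_step1 in DB. destruct DB as [w [Hw Hlw]].
  pose proof (proj1 (enabled_two _ _ _ _ _) Hxy) as Hxy'.
  pose proof (proj1 (enabled_one _ _ _ _) Hw) as Hw'.
  assert (Dxy : DT x <> DT y) by (apply Hd2; exists MD; auto).
  assert (sep : forall z, DT w <> DT z -> forall s, pre D s z = 0 \/ pre D s w = 0).
  { intros z Hz s. destruct (Nat.eq_dec (pre D s z) 0); auto. destruct (Nat.eq_dec (pre D s w) 0); auto.
    exfalso; apply Hz. rewrite (Hd1 s w n0), (Hd1 s z n); auto. }
  assert (Refl : forall l, (l = a \/ l = c) -> forall z, lab D z = Some l -> DT w <> DT z ->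
                 (forall s, pre D s z <= MD s) -> False).
  { intros l Hl' z Hz Hwz Hzs.
    assert (En : enabled D MD [z; w]).
    { apply enabled_two; intro s. destruct (sep z Hwz s) as [E|E]; rewrite E;
        [specialize (Hw' s)|specialize (Hzs s)]; lia. }
    destruct Hl' as [->| ->].
    - apply (HrefD [a; b]); simpl; auto. eapply can_step2_intro; eauto.
    - apply (HrefD [b; c]); simpl; auto. eapply can_step2_intro; eauto. apply perm_swap. }
  destruct (classic (DT w = DT x)) as [E|E].
  - apply (Refl l2) with y; auto.
    + destruct Hl as [[_ ->]|[_ ->]]; auto.
    + congruence.
    + intro s; specialize (Hxy' s); lia.
  - apply (Refl l1) with x; auto.
    + destruct Hl as [[-> _]|[-> _]]; auto.
    + intro s; specialize (Hxy' s); lia.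
Qed.


Definition b2n (P : Prop) : nat := if excluded_middle_informative P then 1 else 0.
Lemma b2n_T (P : Prop) : P -> b2n P = 1.
Proof. unfold b2n; destruct (excluded_middle_informative P); tauto. Qed.
Lemma b2n_F (P : Prop) : ~ P -> b2n P = 0.
Proof. unfold b2n; destruct (excluded_middle_informative P); tauto. Qed.
Lemma b2n_nz (P : Prop) : b2n P <> 0 -> P.
Proof. unfold b2n; destruct (excluded_middle_informative P); tauto. Qed.
Lemma b2n_le1 (P : Prop) : b2n P <= 1.
Proof. unfold b2n; destruct (excluded_middle_informative P); lia. Qed.

Section Clusters.
Variable Act : Type.
Variable N : net Act.
Hypothesis Hfin : finitary N.
Hypothesis Hpl : plain N.
Hypothesis Hsc : structural_conflict N.
Hypothesis HnoM : ~ has_pure_M N.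

Definition en (M : marking N) t := forall s, pre N s t <= M s.
Definition ov t u := ~ pre_disjoint N t u.
Definition cl M t u := en M t /\ en M u /\ ov t u.

Lemma pd_zero t u : pre_disjoint N t u -> forall s, pre N s t = 0 \/ pre N s u = 0.
Proof. intros H s; specialize (H s); lia. Qed.

Lemma pd_sum M t u : pre_disjoint N t u -> en M t -> en M u -> forall s, pre N s t + pre N s u <= M s.
Proof. intros H Ht Hu s; destruct (pd_zero _ _ H s) as [E|E]; rewrite E; [apply Hu|rewrite Nat.add_0_r; apply Ht]. Qed.

Lemma ov_refl t : ov t t.
Proof.
  intro H. destruct Hfin as [Hf _]. destruct (Hf t) as [s Hs]. specialize (H s).
  rewrite Nat.min_id in H. auto.
Qed.

Lemma ov_sym t u : ov t u -> ov u t.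
Proof. unfold ov, pre_disjoint; intros H H'; apply H; intro s; rewrite Nat.min_comm; auto. Qed.

Lemma cl_refl M t : en M t -> cl M t t.
Proof. intro; split; auto; split; auto; apply ov_refl. Qed.

Lemma cl_sym M t u : cl M t u -> cl M u t.
Proof. intros [A [B C]]; split; auto; split; auto; apply ov_sym; auto. Qed.

Lemma cl_trans M t u v : reachable N M -> cl M t u -> cl M u v -> cl M t v.
Proof.
  intros HR [Ht [Hu Htu]] [_ [Hv Huv]]. split; auto; split; auto.
  intro Htv. apply HnoM. exists t, u, v. split; auto; split; auto; split; auto.
  exists M; split; auto. intro s; specialize (Ht s); specialize (Hu s); specialize (Hv s); lia.
Qed.

Lemma cl_en1 M t u : cl M t u -> en M t. Proof. intros [A _]; auto. Qed.
Lemma cl_en2 M t u : cl M t u -> en M u. Proof. intros [_ [A _]]; auto. Qed.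

Lemma ov_not_conc M t u : reachable N M -> ov t u -> ~ (forall s, pre N s t + pre N s u <= M s).
Proof.
  intros HR Hov H. apply Hov. apply Hsc. exists M; split; auto. apply enabled_two; auto.
Qed.

Inductive pw : list (trans N) -> Prop :=
| pw_nil : pw []
| pw_cons : forall t L, (forall u, In u L -> pre_disjoint N t u) -> pw L -> pw (t :: L).

Lemma pw_sum M L : pw L -> (forall t, In t L -> en M t) -> forall s, preG N L s <= M s.
Proof.
  induction 1; intros Hen s; simpl; [lia|].
  destruct (Nat.eq_dec (pre N s t) 0) as [E|E].
  - rewrite E; simpl; apply IHpw; intros; apply Hen; simpl; auto.
  - assert (preG N L s = 0).
    { clear IHpw H0 Hen. induction L as [|u L IH]; simpl; auto.
      destruct (pd_zero t u (H u (or_introl eq_refl)) s) as [E'|E']; [congruence|].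
      rewrite E', IH; auto. intros; apply H; simpl; auto. }
    rewrite H1, Nat.add_0_r. apply Hen; simpl; auto.
Qed.

Definition Id := (nat * (trans N -> Prop))%type.
Record coord := Co { mc : place N -> nat; stp : nat; out : Id -> Prop }.

Definition K (X : coord) (j : Id) x := exists c, snd j c /\ cl (mc X) c x.

Definition mcs (X : coord) t := fun s => mc X s - pre N s t + post N t s.

Definition newcl X t id (C : trans N -> Prop) :=
  exists w, en (mcs X t) w /\ C = cl (mcs X t) w /\
    (forall j c, out X j -> j <> id -> snd j c -> ~ cl (mcs X t) c w).

Definition step X t id : coord :=
  Co (mcs X t) (S (stp X))
     (fun j => (out X j /\ j <> id) \/ (fst j = S (stp X) /\ newcl X t id (snd j))).

Definition X0 : coord :=
  Co (M0 N) 0 (fun j => fst j = 0 /\ exists w, en (M0 N) w /\ snd j = cl (M0 N) w).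

Record CoordOK (X : coord) : Prop := {
  co_reach : reachable N (mc X);
  co_stp : forall j, out X j -> fst j <= stp X;
  co_en : forall j c, out X j -> snd j c -> en (mc X) c;
  co_cov : forall x, en (mc X) x -> exists j, out X j /\ K X j x;
  co_uni : forall i j x, out X i -> out X j -> K X i x -> K X j x -> i = j;
  co_ov : forall j c c', out X j -> snd j c -> snd j c' -> ov c c'
}.

Lemma K_en X j x : K X j x -> en (mc X) x.
Proof. intros [c [_ H]]; eapply cl_en2; eauto. Qed.

Lemma K_closed X j x y : reachable N (mc X) -> K X j x -> cl (mc X) x y -> K X j y.
Proof. intros HR [c [Hc H]] H'. exists c; split; auto. eapply cl_trans; eauto. Qed.

Lemma K_mem X j c : CoordOK X -> out X j -> snd j c -> K X j c.
Proof. intros HX Hj Hc. exists c; split; auto. apply cl_refl. eapply co_en; eauto. Qed.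

Lemma DJ X i j x y : CoordOK X -> out X i -> out X j -> i <> j -> K X i x -> K X j y -> pre_disjoint N x y.
Proof.
  intros HX Hi Hj Hij Hx Hy. apply NNPP; intro Hov.
  apply Hij. apply (co_uni _ HX i j y); auto.
  apply K_closed with x; auto. apply co_reach; auto.
  split; [eapply K_en; eauto|split; [eapply K_en; eauto|exact Hov]].
Qed.

Lemma DJ_sum X i j x y : CoordOK X -> out X i -> out X j -> i <> j -> K X i x -> K X j y ->
  forall s, pre N s x + pre N s y <= mc X s.
Proof.
  intros HX Hi Hj Hij Hx Hy. apply (pd_sum (mc X) x y).
  - exact (DJ X i j x y HX Hi Hj Hij Hx Hy).
  - eapply K_en; eauto.
  - eapply K_en; eauto.
Qed.

Section Step.
Variables (X : coord) (t : trans N) (id : Id).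
Hypothesis HX : CoordOK X.
Hypothesis Hid : out X id.
Hypothesis Ht : K X id t.

Lemma step_en j x : out X j -> j <> id -> K X j x -> en (mcs X t) x.
Proof.
  intros Hj Hne Hx s. pose proof (DJ_sum X j id x t HX Hj Hid Hne Hx Ht s). unfold mcs. lia.
Qed.

Lemma step_reach : reachable N (mcs X t).
Proof.
  eapply reach_step. apply (co_reach _ HX). apply fires_one. split.
  - apply (K_en X id t Ht).
  - intro s; reflexivity.
Qed.

Lemma step_K j x : out X j -> j <> id -> K X j x -> K (step X t id) j x.
Proof.
  intros Hj Hne [c [Hc Hcx]]. exists c; split; auto. simpl.
  split; [|split].
  - apply (step_en j c); auto. apply K_mem; auto.
  - apply (step_en j x); auto. exists c; auto.
  - destruct Hcx as [_ [_ H]]; auto.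
Qed.

Lemma step_ok : CoordOK (step X t id).
Proof.
  pose proof step_reach as HR.
  constructor; simpl.
  - exact HR.
  - intros j [[Hj _]|[Hj _]]; [pose proof (co_stp _ HX j Hj); lia|lia].
  - intros j c [[Hj Hne]|[_ [w [Hw [HC _]]]]] Hc.
    + apply (step_en j c); auto. apply K_mem; auto.
    + rewrite HC in Hc. eapply cl_en2; eauto.
  - intros x Hx.
    destruct (classic (exists j c, out X j /\ j <> id /\ snd j c /\ cl (mcs X t) c x)) as
      [[j [c [Hj [Hne [Hc Hcx]]]]]|Hn].
    + exists j; split; [left; auto|]. exists c; auto.
    + exists (S (stp X), cl (mcs X t) x). split.
      * right; split; auto. exists x; split; auto; split; auto.
        intros j c Hj Hne Hc Hcx. apply Hn; exists j, c; auto.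
      * exists x; simpl; split; apply cl_refl; auto.
  - intros i j x Hi Hj [ci [Hci Hcix]] [cj [Hcj Hcjx]]. simpl in *.
    destruct Hi as [[Hi Hnei]|[Hfi [wi [Hwi [HCi Hni]]]]];
    destruct Hj as [[Hj Hnej]|[Hfj [wj [Hwj [HCj Hnj]]]]].
    + apply (co_uni _ HX i j cj); auto.
      * exists ci; split; auto.
        assert (H1 : cl (mcs X t) ci cj) by (eapply cl_trans; eauto; apply cl_sym; auto).
        destruct H1 as [_ [_ Hov]]. split; [apply (co_en _ HX i); auto|split; [apply (co_en _ HX j); auto|auto]].
      * apply K_mem; auto.
    + exfalso. rewrite HCj in Hcj.
      apply (Hnj i ci Hi Hnei Hci). apply (cl_trans _ ci x wj HR Hcix). apply cl_sym. apply (cl_trans _ wj cj x HR Hcj Hcjx).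
    + exfalso. rewrite HCi in Hci.
      apply (Hni j cj Hj Hnej Hcj). apply (cl_trans _ cj x wi HR Hcjx). apply cl_sym. apply (cl_trans _ wi ci x HR Hci Hcix).
    + rewrite HCi in Hci. rewrite HCj in Hcj.
      assert (Hw : cl (mcs X t) wi wj).
      { apply (cl_trans _ wi x wj HR). apply (cl_trans _ wi ci x HR Hci Hcix).
        apply cl_sym. apply (cl_trans _ wj cj x HR Hcj Hcjx). }
      destruct i as [ni Ci]; destruct j as [nj Cj]; simpl in *. subst.
      f_equal. apply functional_extensionality; intro y. apply propositional_extensionality.
      split; intro H.
      * apply (cl_trans _ wj wi y HR); auto. apply cl_sym; auto.
      * apply (cl_trans _ wi wj y HR); auto.
  - intros j c c' [[Hj _]|[_ [w [_ [HC _]]]]] Hc Hc'.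
    + apply (co_ov _ HX j); auto.
    + rewrite HC in Hc, Hc'. assert (H : cl (mcs X t) c c').
      { apply (cl_trans _ c w c' HR); auto. apply cl_sym; auto. }
      destruct H as [_ [_ H]]; auto.
Qed.

End Step.

Lemma X0_ok : CoordOK X0.
Proof.
  constructor; simpl.
  - constructor.
  - intros j [H _]; lia.
  - intros j c [_ [w [Hw HC]]] Hc. rewrite HC in Hc. eapply cl_en2; eauto.
  - intros x Hx. exists (0, cl (M0 N) x). split.
    + split; auto. exists x; auto.
    + exists x; simpl; split; apply cl_refl; auto.
  - intros [ni Ci] [nj Cj] x [Hfi [wi [Hwi HCi]]] [Hfj [wj [Hwj HCj]]] [ci [Hci Hcix]] [cj [Hcj Hcjx]].
    simpl in *. subst. assert (HR : reachable N (M0 N)) by constructor.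
    assert (Hw : cl (M0 N) wi wj).
    { apply (cl_trans _ wi x wj HR). apply (cl_trans _ wi ci x HR Hci Hcix).
      apply cl_sym. apply (cl_trans _ wj cj x HR Hcj Hcjx). }
    f_equal. apply functional_extensionality; intro y. apply propositional_extensionality.
    split; intro H.
    * apply (cl_trans _ wj wi y HR); auto. apply cl_sym; auto.
    * apply (cl_trans _ wi wj y HR); auto.
  - intros j c c' [_ [w [_ HC]]] Hc Hc'. rewrite HC in Hc, Hc'.
    assert (HR : reachable N (M0 N)) by constructor.
    assert (H : cl (M0 N) c c') by (apply (cl_trans _ c w c' HR); auto; apply cl_sym; auto).
    destruct H as [_ [_ H]]; auto.
Qed.

Inductive plD : Type :=
| PC (X : coord) | PE (t : trans N) (j : Id) | PG (j : Id) | PA (j : Id) (w : trans N).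
Inductive trD : Type :=
| TE (t : trans N) (j : Id) | TT (X : coord) (t : trans N) (j : Id).

Definition preD (s : plD) (r : trD) : nat :=
  match r, s with
  | TE t j, PG j' => b2n (j' = j)
  | TE t j, PA j' w => b2n (j' = j /\ w = t)
  | TT X t j, PC Y => b2n (Y = X)
  | TT X t j, PE t' j' => b2n (t' = t /\ j' = j)
  | _, _ => 0
  end.

Definition postD (r : trD) (s : plD) : nat :=
  match r, s with
  | TE t j, PE t' j' => b2n (t' = t /\ j' = j)
  | TT X t j, PC Y => b2n (Y = step X t j)
  | TT X t j, PG j' => b2n (out (step X t j) j' /\ ~ out X j')
  | TT X t j, PA j' w => b2n (out (step X t j) j' /\ K (step X t j) j' w /\ ~ (out X j' /\ K X j' w))
  | _, _ => 0
  end.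

Definition M0D (s : plD) : nat :=
  match s with
  | PC Y => b2n (Y = X0)
  | PG j => b2n (out X0 j)
  | PA j w => b2n (out X0 j /\ K X0 j w)
  | PE _ _ => 0
  end.

Definition labD (r : trD) : option Act :=
  match r with TE t _ => lab N t | TT _ _ _ => None end.

Definition D : net Act := Net Act plD trD preD postD M0D labD.

Definition InvS (M : marking D) : Prop :=
  exists X, M (PC X) = 1 /\ (forall Y, Y <> X -> M (PC Y) = 0) /\
    (forall j, M (PG j) <= 1) /\ (forall j, stp X < fst j -> M (PG j) = 0).

Lemma step_neq X t j : step X t j <> X.
Proof. intro H. assert (stp (step X t j) = stp X) by (rewrite H; auto). simpl in H0; lia. Qed.

Lemma InvS_reach1 M : reach1 Act D M -> InvS M.
Proof.
  induction 1.
  - exists X0. simpl. split; [apply b2n_T; auto|split; [intros; apply b2n_F; auto|split]].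
    + intro; apply b2n_le1.
    + intros j Hj. apply b2n_F. intros [H' _]. lia.
  - destruct IHreach1 as [X [H1 [H2 [H3 H4]]]].
    apply fires_one in H0. destruct H0 as [Hen Hf]. simpl in Hen, Hf.
    destruct t as [t j|Y t j].
    + exists X. repeat split.
      * rewrite Hf; simpl; lia.
      * intros Y HY; rewrite Hf; simpl; rewrite H2; auto.
      * intro j'; rewrite Hf; simpl; specialize (H3 j'); lia.
      * intros j' Hj'; rewrite Hf; simpl; rewrite H4; auto.
    + assert (Y = X).
      { specialize (Hen (PC Y)); simpl in Hen. rewrite b2n_T in Hen; auto.
        apply NNPP; intro Hn; rewrite H2 in Hen; auto; lia. }
      subst Y. exists (step X t j). repeat split.
      * rewrite Hf; simpl. rewrite H2 by apply step_neq. rewrite (b2n_T (step X t j = step X t j)) by auto.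
        rewrite (b2n_F (step X t j = X)) by apply step_neq. lia.
      * intros Z HZ; rewrite Hf; simpl. rewrite (b2n_F (Z = step X t j)) by auto.
        destruct (classic (Z = X)) as [->|HZX]; [rewrite H1, b2n_T; auto|rewrite H2, b2n_F; auto].
      * intro j'; rewrite Hf; simpl.
        unfold b2n. destruct (excluded_middle_informative _) as [[[[Ho _]|[Hs _]] Hno]|]; [tauto| |].
        -- rewrite H4 by lia. lia.
        -- specialize (H3 j'); lia.
      * intros j' Hj'; rewrite Hf; simpl in *. rewrite H4 by lia.
        rewrite b2n_F; [lia|]. intros [[[Ho _]|[Hs _]] Hno]; [tauto|lia].
Qed.

Lemma D_distributed : distributed D.
Proof.
  exists (option Id).
  exists (fun s => match s with PG j => Some j | PA j _ => Some j | _ => None end).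
  exists (fun r => match r with TE _ j => Some j | TT _ _ _ => None end).
  split.
  - intros s r H. destruct r as [t j|X t j]; destruct s; simpl in H; try lia;
      apply b2n_nz in H; try destruct H; subst; auto.
  - intros r1 r2 [M [HR Hen]] Heq. pose proof (proj1 (enabled_two Act D M r1 r2) Hen) as Hen'. clear Hen. rename Hen' into Hen. simpl in Hen.
    apply (reachable_reach1 Act D), InvS_reach1 in HR. destruct HR as [X [H1 [H2 [H3 H4]]]].
    destruct r1 as [t1 j1|X1 t1 j1]; destruct r2 as [t2 j2|X2 t2 j2]; try discriminate.
    + injection Heq; intros; subst. specialize (Hen (PG j2)); specialize (H3 j2); simpl in Hen.
      rewrite !b2n_T in Hen; auto; lia.
    + specialize (Hen (PC X1)) as E1. simpl in E1. rewrite b2n_T in E1 by auto.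
      destruct (classic (X1 = X2)) as [<-|Hne].
      * rewrite b2n_T in E1 by auto. destruct (classic (X1 = X)) as [->|]; [lia|rewrite H2 in E1; auto; lia].
      * specialize (Hen (PC X2)) as E2. simpl in E2. rewrite (b2n_T (X2 = X2)) in E2 by auto.
        assert (X1 = X) by (apply NNPP; intro; rewrite H2 in E1; auto; lia).
        assert (X2 = X) by (apply NNPP; intro; rewrite H2 in E2; auto; lia). congruence.
Qed.

Lemma preG_app (l1 l2 : list (trans N)) s : preG N (l1 ++ l2) s = preG N l1 s + preG N l2 s.
Proof. induction l1; simpl; auto; lia. Qed.
Lemma postG_app (l1 l2 : list (trans N)) s : postG N (l1 ++ l2) s = postG N l1 s + postG N l2 s.
Proof. induction l1; simpl; auto; lia. Qed.
Lemma preG_perm (l1 l2 : list (trans N)) s : Permutation l1 l2 -> preG N l1 s = preG N l2 s.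
Proof. induction 1; simpl; lia. Qed.

Definition cnt (p : trans N * Id) (E : list (trans N * Id)) : nat :=
  fold_right (fun q acc => b2n (q = p) + acc) 0 E.
Lemma cnt_app p l1 l2 : cnt p (l1 ++ l2) = cnt p l1 + cnt p l2.
Proof. induction l1; simpl; auto; lia. Qed.
Lemma cnt_In p E : 1 <= cnt p E -> In p E.
Proof.
  induction E as [|q E IH]; simpl; [lia|]. intro H.
  destruct (classic (q = p)); auto. rewrite b2n_F in H; auto.
Qed.
Lemma b2n_iff (P Q : Prop) : (P <-> Q) -> b2n P = b2n Q.
Proof. intro H. destruct (classic P). rewrite !b2n_T; tauto. rewrite !b2n_F; tauto. Qed.

Lemma nth_split {A} (l : list A) k a : nth_error l k = Some a -> l = firstn k l ++ a :: skipn (S k) l.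
Proof.
  revert k; induction l as [|b l IH]; intros [|k] H; simpl in *; try discriminate.
  - injection H; intros; subst; auto.
  - f_equal; apply IH; auto.
Qed.

Definition teD (p : trans N * Id) : trD := TE (fst p) (snd p).

Definition PendOK X (P : list (trans N * Id)) :=
  (forall p, In p P -> out X (snd p) /\ K X (snd p) (fst p)) /\ NoDup (map snd P).

Lemma PendOK_perm X P P' : Permutation P P' -> PendOK X P -> PendOK X P'.
Proof.
  intros Hp [H1 H2]; split.
  - intros p Hin; apply H1; eapply Permutation_in; [apply Permutation_sym|]; eauto.
  - eapply Permutation_NoDup; [apply Permutation_map|]; eauto.
Qed.

Record MdOK X (P E : list (trans N * Id)) (Md : marking D) : Prop := {
  md_c1 : Md (PC X) = 1;
  md_c0 : forall Y, Y <> X -> Md (PC Y) = 0;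
  md_e : forall t j, Md (PE t j) = cnt (t, j) E;
  md_g : forall j, Md (PG j) = b2n (out X j /\ ~ In j (map snd P));
  md_a1 : forall j w, out X j -> ~ In j (map snd P) -> K X j w -> 1 <= Md (PA j w);
  md_a2 : forall j w, out X j -> 1 <= Md (PA j w) -> K X j w;
  md_f : forall j w, stp X < fst j -> Md (PA j w) = 0
}.

Lemma MdOK_perm X P P' E Md : Permutation P P' -> MdOK X P E Md -> MdOK X P' E Md.
Proof.
  intros Hp H. assert (Hi : forall j, In j (map snd P) <-> In j (map snd P')).
  { intro j; split; apply Permutation_in; [|apply Permutation_sym]; apply Permutation_map; auto. }
  destruct H; constructor; auto.
  - intro j; rewrite md_g0; apply b2n_iff. rewrite Hi; tauto.
  - intros j w Ho Hn; apply md_a3; auto; rewrite Hi; auto.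
Qed.

Definition Rw X U E (x : st_marking D) (y : st_marking N) : Prop :=
  CoordOK X /\ PendOK X (U ++ E) /\ MdOK X (U ++ E) E (fst x) /\
  snd x = map teD U /\ snd y = map fst U /\
  forall s, fst y s = mc X s + postG N (map fst E) s - preG N (map fst (U ++ E)) s.

Definition R (x : st_marking D) (y : st_marking N) : Prop := exists X U E, Rw X U E x y.

Lemma pw_of X P : CoordOK X -> PendOK X P -> pw (map fst P).
Proof.
  intros HX [H1 H2]. induction P as [|p P IH]; simpl; constructor.
  - intros u Hu. apply in_map_iff in Hu. destruct Hu as [q [<- Hq]].
    simpl in H2. apply NoDup_cons_iff in H2. destruct H2 as [Hn _].
    destruct (H1 p (or_introl eq_refl)) as [Op Kp]. destruct (H1 q (or_intror Hq)) as [Oq Kq].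
    apply (DJ X (snd p) (snd q)); auto. intro E; apply Hn. rewrite E; apply in_map; auto.
  - apply IH. intros; apply H1; simpl; auto. simpl in H2; apply NoDup_cons_iff in H2; tauto.
Qed.

Lemma pend_bound X P : CoordOK X -> PendOK X P -> forall s, preG N (map fst P) s <= mc X s.
Proof.
  intros HX HP. apply pw_sum. eapply pw_of; eauto.
  intros t Ht. apply in_map_iff in Ht. destruct Ht as [p [<- Hp]].
  destruct HP as [H1 _]. destruct (H1 p Hp) as [_ Kp]. eapply K_en; eauto.
Qed.

Lemma plus_core X U E Md Ud Mn Un w id :
  Rw X U E (Md, Ud) (Mn, Un) -> (forall s, preD s (TE w id) <= Md s) ->
  (forall s, pre N s w <= Mn s) /\
  Rw X (U ++ [(w, id)]) E (fun s => Md s - preD s (TE w id), Ud ++ [TE w id])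
     (fun s => Mn s - pre N s w, Un ++ [w]).
Proof.
  intros [HX [HP [HM [HUd [HUn HMn]]]]] Hen; simpl in *.
  assert (Hg := Hen (PG id)); simpl in Hg. rewrite b2n_T in Hg by auto.
  rewrite (md_g _ _ _ _ HM) in Hg. assert (Hg' : b2n (out X id /\ ~ In id (map snd (U ++ E))) <> 0) by lia.
  apply b2n_nz in Hg'. destruct Hg' as [Hid Hnin].
  assert (Ha := Hen (PA id w)); simpl in Ha. rewrite b2n_T in Ha by auto.
  assert (Kw := md_a2 _ _ _ _ HM id w Hid Ha).
  assert (HP' : PendOK X ((w, id) :: U ++ E)).
  { destruct HP as [H1 H2]; split.
    - intros p [<-|Hp]; auto.
    - simpl; apply NoDup_cons_iff; auto. }
  assert (Hperm : Permutation ((w, id) :: U ++ E) ((U ++ [(w, id)]) ++ E)).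
  { rewrite <- app_assoc. simpl. apply Permutation_middle. }
  pose proof (pend_bound X _ HX HP') as Hb. simpl in Hb.
  split.
  - intro s. rewrite HMn. specialize (Hb s). lia.
  - split; [auto|split; [|split; [|split; [|split]]]].
    + eapply PendOK_perm; eauto.
    + apply MdOK_perm with ((w, id) :: U ++ E); auto. destruct HM.
      constructor; intros; cbn beta iota in *; simpl in *.
      * rewrite Nat.sub_0_r; auto.
      * rewrite Nat.sub_0_r; auto.
      * rewrite Nat.sub_0_r; auto.
      * rewrite md_g0. destruct (classic (j = id)) as [->|Hne].
        -- rewrite (b2n_T (id = id)) by auto.
           rewrite (b2n_F (out X id /\ ~ (id = id \/ In id (map snd (U ++ E))))) by tauto.
           rewrite b2n_T; auto.
        -- rewrite (b2n_F (j = id)) by auto. rewrite Nat.sub_0_r. apply b2n_iff. intuition.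
      * simpl in H0. rewrite b2n_F by (intros [E1 _]; apply H0; subst; left; reflexivity).
        rewrite Nat.sub_0_r. apply md_a3; auto.
      * apply md_a4; auto. lia.
      * rewrite md_f0; auto.
    + simpl. rewrite HUd, map_app; auto.
    + simpl. rewrite HUn, map_app; auto.
    + intro s. simpl. rewrite HMn. rewrite !map_app, !preG_app. simpl.
      lia.
Qed.

Lemma minus_core X U E Md Ud Mn Un k r :
  Rw X U E (Md, Ud) (Mn, Un) -> nth_error Ud k = Some r ->
  exists t id, r = TE t id /\ nth_error Un k = Some t /\
  Rw X (firstn k U ++ skipn (S k) U) ((t, id) :: E)
     (fun s => Md s + postD r s, firstn k Ud ++ skipn (S k) Ud)
     (fun s => Mn s + post N t s, firstn k Un ++ skipn (S k) Un).
Proof.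
  intros [HX [HP [HM [HUd [HUn HMn]]]]] Hr; cbn [fst snd] in *.
  rewrite HUd, nth_error_map in Hr.
  destruct (nth_error U k) as [[t id]|] eqn:Ek; simpl in Hr; [|discriminate].
  injection Hr; intros <-. exists t, id. split; [reflexivity|split].
  { rewrite HUn, nth_error_map, Ek; reflexivity. }
  pose proof (nth_split U k _ Ek) as Hsp.
  set (U1 := firstn k U) in *. set (U2 := skipn (S k) U) in *.
  assert (Hperm : Permutation (U ++ E) ((U1 ++ U2) ++ (t, id) :: E)).
  { rewrite Hsp at 1. rewrite <- !app_assoc. simpl. apply Permutation_app_head. apply Permutation_middle. }
  pose proof (pend_bound X _ HX HP) as Hb.
  split; [auto|split; [|split; [|split; [|split]]]].
  - eapply PendOK_perm; eauto.
  - apply MdOK_perm with (U ++ E); auto. destruct HM.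
    constructor; intros; cbn beta iota in *; simpl in *.
    + rewrite Nat.add_0_r; auto.
    + rewrite Nat.add_0_r; auto.
    + rewrite md_e0. rewrite Nat.add_comm. f_equal. apply b2n_iff.
      split; [intros [-> ->]; auto|intro H; injection H; auto].
    + rewrite Nat.add_0_r; auto.
    + rewrite Nat.add_0_r; auto.
    + apply md_a4; auto. lia.
    + rewrite Nat.add_0_r; auto.
  - cbn [snd]. rewrite HUd, firstn_map, skipn_map, map_app; auto.
  - cbn [snd]. rewrite HUn, firstn_map, skipn_map, map_app; auto.
  - intro s. simpl. rewrite HMn.
    rewrite (preG_perm (map fst ((U1 ++ U2) ++ (t, id) :: E)) (map fst (U ++ E))).
    + specialize (Hb s). simpl. lia.
    + apply Permutation_map, Permutation_sym; auto.
Qed.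

Arguments step : simpl never.
Lemma step_not_id X t id : CoordOK X -> out X id -> ~ out (step X t id) id.
Proof.
  unfold step; simpl; intros HX Hid [[_ H]|[H _]]; [auto|]. pose proof (co_stp _ HX id Hid); lia.
Qed.

Lemma tau_core X U E1 E2 t id Md Ud y :
  Rw X U (E1 ++ (t, id) :: E2) (Md, Ud) y ->
  Rw (step X t id) U (E1 ++ E2)
     (fun s => Md s - preD s (TT X t id) + postD (TT X t id) s, Ud) y.
Proof.
  intros [HX [HP [HM [HUd [HUn HMn]]]]]; cbn [fst snd] in *.
  set (E := E1 ++ (t, id) :: E2) in *. set (P' := U ++ E1 ++ E2).
  assert (Hperm : Permutation (U ++ E) ((t, id) :: P')).
  { unfold E, P'. apply Permutation_sym. rewrite (app_assoc U E1 E2), (app_assoc U E1 ((t, id) :: E2)). apply Permutation_middle. }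
  assert (HP2 : PendOK X ((t, id) :: P')) by (eapply PendOK_perm; eauto).
  destruct HP2 as [HPin HPnd]. simpl in HPnd. apply NoDup_cons_iff in HPnd. destruct HPnd as [Hnin HPnd].
  destruct (HPin (t, id) (or_introl eq_refl)) as [Hid Ht]; simpl in Hid, Ht.
  assert (HX' := step_ok X t id HX Hid Ht).
  assert (Hnid := step_not_id X t id HX Hid).
  assert (HinE : forall j, In j (map snd (U ++ E)) <-> j = id \/ In j (map snd P')).
  { intro j. split; intro H.
    - apply (Permutation_in _ (Permutation_map snd Hperm)) in H. simpl in H. destruct H as [<-|H]; auto.
    - apply (Permutation_in _ (Permutation_sym (Permutation_map snd Hperm))). simpl. destruct H as [->|H]; auto. }
  assert (HP'o : forall j, In j (map snd P') -> out X j /\ j <> id).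
  { intros j Hj. split; [|intro; subst; auto].
    apply in_map_iff in Hj; destruct Hj as [p [<- Hp]]. apply (HPin p); simpl; auto. }
  pose proof (pend_bound X _ HX HP) as Hb.
  split; [auto|split; [|split; [|split; [|split]]]].
  - split; auto. intros p Hp. destruct (HPin p (or_intror Hp)) as [Hop Hkp].
    assert (snd p <> id) by (apply (HP'o (snd p)); apply in_map; auto).
    split; [left; auto|]. apply step_K; auto.
  - destruct HM. constructor; intros; cbn beta iota in *; simpl in *.
    + rewrite md_c3 by (apply step_neq). rewrite (b2n_F (step X t id = X)) by apply step_neq.
      rewrite b2n_T; auto.
    + rewrite (b2n_F (Y = step X t id)) by auto.
      destruct (classic (Y = X)) as [->|]; [rewrite md_c2, b2n_T; auto|rewrite md_c3, b2n_F; auto].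
    + rewrite md_e0. unfold E. rewrite !cnt_app. simpl.
      rewrite (b2n_iff ((t, id) = (t0, j)) (t0 = t /\ j = id)); [lia|].
      split; [intro H; injection H; auto|intros [-> ->]; auto].
    + rewrite md_g0. destruct (classic (out X j)) as [Ho|Ho].
      * rewrite (b2n_F (_ /\ ~ out X j)) by tauto.
        destruct (classic (j = id)) as [->|Hne].
        -- rewrite (b2n_F (out X id /\ _)) by (rewrite HinE; tauto).
           rewrite (b2n_F (_ /\ ~ In id _)) by (intros [H _]; apply Hnid; exact H). reflexivity.
        -- rewrite Nat.sub_0_r, Nat.add_0_r. apply b2n_iff. rewrite HinE.
           split; [intros [_ H]; split; [left; split; auto|tauto]|intros [_ H]; split; [auto|tauto]].
      * rewrite (b2n_F (out X j /\ _)) by tauto. simpl. apply b2n_iff.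
        split; [intros [H1 H2]; split; auto; intro H3; apply H2; apply (HP'o j H3)|tauto].
    + unfold b2n. destruct (excluded_middle_informative _) as [|Hn]; [lia|].
      assert (Hok : out X j /\ K X j w) by (apply NNPP; intro Hc; apply Hn; tauto). destruct Hok as [Ho Hk].
      assert (j <> id) by (intro; subst; auto).
      assert (1 <= Md (PA j w)); [|lia]. apply md_a3; auto. rewrite HinE; tauto.
    + unfold b2n in H0. destruct (excluded_middle_informative _) as [Hy|Hn]; [tauto|].
      destruct (classic (out X j)) as [Ho|Ho].
      * assert (j <> id) by (intro; subst; auto). apply step_K; auto. apply md_a4; auto. lia.
      * exfalso. destruct H as [[H _]|[H _]]; [auto|]. rewrite md_f0 in H0; lia.
    + rewrite md_f0 by lia. rewrite b2n_F; auto. intros [Ho _].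
      pose proof (co_stp _ HX' j Ho); simpl in *; lia.
  - auto.
  - auto.
  - intro s. rewrite HMn. simpl. unfold E, P' in *. specialize (Hb s).
    rewrite !map_app, !postG_app, !preG_app in *. simpl in *. unfold mcs. lia.
Qed.

Lemma tau_inv X U E x y x' :
  Rw X U E x y -> st_step D x STtau x' ->
  exists X' E', length E' < length E /\ Rw X' U E' x' y.
Proof.
  intros HR Hs. inversion Hs; subst.
  pose proof HR as HR0. destruct HR0 as [HX [HP [HM [HUd [HUn HMn]]]]]. cbn [fst snd] in *.
  apply fires_one in H0. destruct H0 as [Hen Hf].
  destruct t as [t j|Y t j]; [simpl in H; exfalso; destruct Hpl as [_ Hnt]; exact (Hnt t H)|].
  assert (Y = X).
  { specialize (Hen (PC Y)); simpl in Hen. rewrite b2n_T in Hen by auto.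
    apply NNPP; intro Hn; rewrite (md_c0 _ _ _ _ HM) in Hen; auto; lia. }
  subst Y.
  assert (HE : In (t, j) E).
  { specialize (Hen (PE t j)); simpl in Hen. rewrite b2n_T in Hen by auto.
    rewrite (md_e _ _ _ _ HM) in Hen. apply cnt_In; auto. }
  apply in_split in HE. destruct HE as [E1 [E2 ->]].
  exists (step X t j), (E1 ++ E2). split.
  - rewrite !length_app; simpl; lia.
  - replace M' with (fun s => M s - preD s (TT X t j) + postD (TT X t j) s).
    + apply tau_core; auto.
    + apply functional_extensionality; intro s; rewrite Hf; auto.
Qed.

Lemma tau_fire X U p E x y :
  Rw X U (p :: E) x y -> exists x', st_step D x STtau x' /\ Rw (step X (fst p) (snd p)) U E x' y.
Proof.
  intros HR. destruct x as [Md Ud]. destruct p as [t j].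
  exists (fun s => Md s - preD s (TT X t j) + postD (TT X t j) s, Ud). split.
  - apply (st_tau Act D Md _ Ud (TT X t j)); [reflexivity|]. apply fires_one. split; [|intro; reflexivity].
    destruct HR as [HX [HP [HM _]]]. cbn [fst] in HM.
    intros [Y|t' j'|j'|j' w]; simpl; auto; try lia.
    + destruct (classic (Y = X)) as [->|]; [rewrite b2n_T, (md_c1 _ _ _ _ HM); auto|rewrite b2n_F; auto; lia].
    + rewrite (md_e _ _ _ _ HM). simpl. unfold b2n. destruct (excluded_middle_informative _); [|lia].
      destruct (excluded_middle_informative _); [lia|]. destruct a; subst; tauto.
  - apply (tau_core X U [] E t j); auto.
Qed.

Lemma proc X U E x y : Rw X U E x y ->
  exists X' x', ltau_star (stlab Act) STtau (st_lts D) x x' /\ Rw X' U [] x' y.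
Proof.
  revert X x. induction E as [|p E IH]; intros X x HR.
  - exists X, x; split; auto. apply rt_refl.
  - destruct (tau_fire X U p E x y HR) as [x1 [Hs HR1]].
    destruct (IH _ _ HR1) as [X2 [x2 [Ht HR2]]].
    exists X2, x2; split; auto. eapply rt_trans; [apply rt_step; exact Hs|exact Ht].
Qed.

Lemma no_inf n : forall X U E x y, length E <= n -> Rw X U E x y ->
  forall f : nat -> st_marking D, f 0 = x -> (forall k, st_step D (f k) STtau (f (S k))) -> False.
Proof.
  induction n as [|n IH]; intros X U E x y Hl HR f Hf0 Hf.
  - destruct (tau_inv X U E x y (f 1) HR) as [X' [E' [Hl' _]]]; [rewrite <- Hf0; apply Hf|lia].
  - destruct (tau_inv X U E x y (f 1) HR) as [X' [E' [Hl' HR']]]; [rewrite <- Hf0; apply Hf|].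
    apply (IH X' U E' (f 1) y ltac:(lia) HR' (fun k => f (S k))); auto.
Qed.

Lemma preG_In (l : list (trans N)) k s : In k l -> pre N s k <= preG N l s.
Proof. induction l as [|a l IH]; simpl; [tauto|]. intros [->|H]; [lia|specialize (IH H); lia]. Qed.

Lemma K_cl X j x y : CoordOK X -> out X j -> K X j x -> K X j y -> cl (mc X) x y.
Proof.
  intros HX Hj [c [Hc Hcx]] [c' [Hc' Hcy]].
  assert (HR := co_reach _ HX).
  assert (Hcc : cl (mc X) c c').
  { split; [apply (co_en _ HX j); auto|split; [apply (co_en _ HX j); auto|apply (co_ov _ HX j); auto]]. }
  apply (cl_trans _ x c y HR); [apply cl_sym; auto|]. apply (cl_trans _ c c' y HR); auto.
Qed.

Lemma N_plus X U x y w : Rw X U [] x y -> (forall s, pre N s w <= fst y s) ->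
  exists id, forall s, preD s (TE w id) <= fst x s.
Proof.
  intros [HX [HP [HM [HUd [HUn HMn]]]]] Hw. rewrite app_nil_r in *.
  pose proof (pend_bound X _ HX HP) as Hb.
  assert (Hen : en (mc X) w) by (intro s; specialize (Hw s); rewrite HMn in Hw; simpl in Hw; lia).
  destruct (co_cov _ HX w Hen) as [j [Hj Kw]].
  assert (Hnin : ~ In j (map snd U)).
  { intro Hin. apply in_map_iff in Hin. destruct Hin as [[k j'] [Hjj Hk]]. simpl in Hjj; subst j'.
    destruct HP as [HPin _]. destruct (HPin (k, j)) as [_ Kk]; [auto|]. simpl in Kk.
    assert (Hcl := K_cl X j k w HX Hj Kk Kw). destruct Hcl as [_ [_ Hov]].
    apply (ov_not_conc (mc X) k w (co_reach _ HX) Hov). intro s.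
    specialize (Hw s); rewrite HMn in Hw; simpl in Hw. specialize (Hb s).
    assert (pre N s k <= preG N (map fst U) s) by (apply preG_In; apply (in_map fst U (k, j)); auto).
    lia. }
  exists j. intros [Y|t' j'|j'|j' w']; simpl; try lia.
  - unfold b2n. destruct (excluded_middle_informative _) as [->|]; [|lia].
    rewrite (md_g _ _ _ _ HM). rewrite b2n_T; auto.
  - unfold b2n at 1. destruct (excluded_middle_informative _) as [[-> ->]|]; [|lia].
    apply (md_a1 _ _ _ _ HM); auto.
Qed.

Lemma init_R : Rw X0 [] [] (M0D, []) (M0 N, []).
Proof.
  split; [apply X0_ok|split; [|split; [|split; [|split]]]]; simpl; auto.
  - split; [simpl; tauto|constructor].
  - constructor; simpl; intros.
    + apply b2n_T; auto.
    + apply b2n_F; auto.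
    + reflexivity.
    + apply b2n_iff. tauto.
    + rewrite b2n_T; auto.
    + unfold b2n in H0. destruct (excluded_middle_informative _); [tauto|lia].
    + apply b2n_F. intros [[H' _] _]. lia.
  - intro s; lia.
Qed.

Theorem D_bisim : bSTb_div D N.
Proof.
  exists R. split; [|split].
  - exists X0, [], []. apply init_R.
  - split.
    + intros x y a x' [X [U [E HR]]] Hs. destruct x as [Md Ud]. destruct y as [Mn Un].
      inversion Hs as [Ma Ua ta aa H3 H4|Ma Ua ta aa n H4 H5 H3|Ma M' Ua ta H3 H4]; subst.
      *
        destruct ta as [w id|Y t j]; simpl in H3; [|discriminate].
        pose proof (proj1 (enabled_one _ _ _ _) H4) as H4'; clear H4; rename H4' into H4.
        destruct (plus_core X U E Md Ud Mn Un w id HR H4) as [HwN HR'].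
        exists (Mn, Un), (fun s => Mn s - pre N s w, Un ++ [w]). split; [apply rt_refl|split].
        -- left. apply st_plus; auto. apply enabled_one; auto.
        -- split; [exists X, U, E; auto|exists X, (U ++ [(w, id)]), E; auto].
      *
        destruct n as [|k]; [lia|]. replace (S k - 1) with k in * by lia.
        destruct (minus_core X U E Md Ud Mn Un k ta HR H5) as [t' [id [-> [Hk HR']]]].
        exists (Mn, Un), (fun s => Mn s + post N t' s, firstn k Un ++ skipn (S k) Un).
        split; [apply rt_refl|split].
        -- left. cbn [ltr st_lts].
           assert (Hk' : nth_error Un (S k - 1) = Some t') by (replace (S k - 1) with k by lia; exact Hk).
           pose proof (st_minus Act N Mn Un t' aa (S k) H4 Hk' H3) as Hst.
           replace (S k - 1) with k in Hst by lia. exact Hst.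
        -- split; [exists X, U, E; auto|exists X, (firstn k U ++ skipn (S k) U), ((t', id) :: E); auto].
      *
        destruct (tau_inv X U E (Md, Ud) (Mn, Un) (M', Ud) HR Hs) as [X' [E' [_ HR']]].
        exists (Mn, Un), (Mn, Un). split; [apply rt_refl|split; [right; auto|]].
        split; [exists X, U, E; auto|exists X', U, E'; auto].
    + intros x y f Hf0 Hf HRf. exfalso. destruct (HRf 0) as [X [U [E HR]]].
      apply (no_inf (length E) X U E (f 0) y (le_n _) HR f); auto.
  - split.
    + intros y x a y' [X [U [E HR]]] Hs. destruct x as [Md Ud]. destruct y as [Mn Un].
      inversion Hs as [Ma Ua t aa H3 H4|Ma Ua t aa n H4 H5 H3|Ma M' Ua t H3 H4]; subst.
      *
        pose proof (proj1 (enabled_one _ _ _ _) H4) as H4'; clear H4; rename H4' into H4.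
        destruct (proc X U E (Md, Ud) (Mn, Un) HR) as [X1 [[Md1 Ud1] [Ht HR1]]].
        destruct (N_plus X1 U (Md1, Ud1) (Mn, Un) t HR1 H4) as [id Hid].
        destruct (plus_core X1 U [] Md1 Ud1 Mn Un t id HR1 Hid) as [_ HR'].
        exists (Md1, Ud1), (fun s => Md1 s - preD s (TE t id), Ud1 ++ [TE t id]).
        split; [exact Ht|split].
        -- left. apply st_plus; auto. apply enabled_one; auto.
        -- split; [exists X1, U, []; auto|exists X1, (U ++ [(t, id)]), []; auto].
      *
        destruct n as [|k]; [lia|]. replace (S k - 1) with k in * by lia.
        destruct HR as [HX [HP [HM [HUd [HUn HMn]]]]] eqn:HRe. simpl in HUd, HUn. subst Ud Un.
        rewrite nth_error_map in H5. destruct (nth_error U k) as [[t' id]|] eqn:Ek; simpl in H5; [|discriminate].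
        injection H5; intros; subst t'.
        assert (Hk : nth_error (map teD U) k = Some (TE t id)) by (rewrite nth_error_map, Ek; auto).
        destruct (minus_core X U E Md (map teD U) Mn (map fst U) k _ HR Hk) as [t2 [id2 [Heq [Hk2 HR']]]].
        injection Heq; intros; subst t2 id2.
        exists (Md, map teD U), (fun s => Md s + postD (TE t id) s, firstn k (map teD U) ++ skipn (S k) (map teD U)).
        split; [apply rt_refl|split].
        -- left. cbn [ltr st_lts].
           assert (Hk' : nth_error (map teD U) (S k - 1) = Some (TE t id)) by (replace (S k - 1) with k by lia; exact Hk).
           pose proof (st_minus Act D Md (map teD U) (TE t id) aa (S k) H4 Hk' H3) as Hst.
           replace (S k - 1) with k in Hst by lia. exact Hst.
        -- split; [exists X, U, E; auto|exists X, (firstn k U ++ skipn (S k) U), ((t, id) :: E); auto].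
      *
        exfalso. destruct Hpl as [_ Hnt]. exact (Hnt t H3).
    + intros y x f Hf0 Hf HRf. exfalso. specialize (Hf 0).
      inversion Hf as [| |Ma M' Ua t H3 H4]; subst.
      destruct Hpl as [_ Hnt]. exact (Hnt t H3).
Qed.


End Clusters.

Theorem corollary7p13 (Act : Type) (N : net Act)
  (approx : net Act -> net Act -> Prop) :
  Equivalence approx ->
  (forall N1 N2, bSTb_div N1 N2 -> approx N1 N2) ->
  (forall N1 N2, approx N1 N2 -> step_failures_eq N1 N2) ->
  finitary N -> plain N -> structural_conflict N ->
  ((exists D : net Act, distributed D /\ approx D N) <-> ~ has_pure_M N).
Proof.
  intros Heqv Hb Hf Hfin Hpl Hsc. split.
  - intros [D' [Hd Happ]]. apply (only_if_dir N D'); auto.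
  - intro HnoM. exists (D Act N). split.
    + apply D_distributed.
    + apply Hb. apply D_bisim; auto.
Qed.
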